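(* Let $\alpha\in\mathcal{L}^*(E_{\mathbb{Z}})$ with $|\alpha|\ge2$. Then there exists $n\ge0$ such that $$\alpha=\gamma_0\, i_1^{(n)}\cdots i_k^{(n)}\,\gamma_1,\qquad 2\le k\le 4,\ i_1,\dots,i_k\in\{0,1\},$$ where $\gamma_0$ is a final subpath (suffix) of $0^{(n)}$ or of $1^{(n)}$ and $\gamma_1$ is an initial subpath (prefix) of $0^{(n)}$ or of $1^{(n)}$, with $0\le|\gamma_0|,|\gamma_1|<2^n$ ($n$ need not be unique). Moreover, for a fixed such $n$, this expression of $\alpha$ in $i^{(n)}$-blocks is unique.
   Context: The two-sided Thue--Morse sequence $\omega=(\omega_k)_{k\in\mathbb{Z}}$ over $\{0,1\}$ is defined by $\omega_0=0$, $\omega_{2^n+j}=1-\omega_j$ for $n\ge0$, $0\le j<2^n$, and $\omega_{-i}=\omega_{i-1}$ for $i\ge1$. $\mathcal{L}^*(E_{\mathbb{Z}})$ denotes the set of finite nonempty words occurring in $\omega$. Blocks $i^{(n)}$: $0^{(0)}=0$, $1^{(0)}=1$, and inductively $0^{(n)}=0^{(n-1)}1^{(n-1)}$, $1^{(n)}=1^{(n-1)}0^{(n-1)}$ (concatenation); $|i^{(n)}|=2^n$. Empty $\gamma_0,\gamma_1$ are allowed. *)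

(* Defs.v *)
From mathcomp Require Import all_boot all_order all_algebra.
Set Implicit Arguments. Unset Strict Implicit. Unset Printing Implicit Defensive.
Import GRing.Theory Num.Theory.

(* Letters 0,1 are encoded as false,true. *)

(* One-sided Thue--Morse on nat, following the recursion
   w_0 = 0, w_(2^n + j) = 1 - w_j (0 <= j < 2^n):
   for m >= 1, n = trunc_log 2 m and j = m - 2^n < 2^n.
   The fuel argument only ensures termination (fuel m.+1 suffices). *)
Fixpoint tm_fuel (fuel m : nat) : bool :=
  match fuel with
  | 0 => false
  | f.+1 => if m is 0 then false
            else ~~ tm_fuel f (m - 2 ^ trunc_log 2 m)
  end.

Definition tm (m : nat) : bool := tm_fuel m.+1 m.

(* Two-sided sequence: omega_(-i) = omega_(i-1) for i >= 1;
   Negz n = -(n+1), so omega (Negz n) = omega_n. *)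
Definition omega (k : int) : bool :=
  match k with
  | Posz n => tm n
  | Negz n => tm n
  end.

(* alpha is in L^*(E_Z): a finite nonempty factor of omega. *)
Definition occurs (alpha : seq bool) : Prop :=
  0 < size alpha /\
  exists m : int, alpha = mkseq (fun i => omega (m + (i%:Z))%R) (size alpha).

Fixpoint block (n : nat) (i : bool) : seq bool :=
  match n with
  | 0 => [:: i]
  | n'.+1 => block n' i ++ block n' (~~ i)
  end.

Definition block_decomp (n : nat) (alpha g0 : seq bool) (ks : seq bool)
    (g1 : seq bool) : Prop :=
  [/\ alpha = g0 ++ flatten [seq block n i | i <- ks] ++ g1,
      2 <= size ks <= 4,
      (exists i : bool, suffix g0 (block n i)),
      (exists i : bool, prefix g1 (block n i)) &
      (size g0 < 2 ^ n) && (size g1 < 2 ^ n)].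

(* Main.v *)
Require Import Defs.
From mathcomp Require Import all_boot all_order all_algebra.
From mathcomp Require Import zify ring.
Set Implicit Arguments. Unset Strict Implicit. Unset Printing Implicit Defensive.
Import GRing.Theory Num.Theory.

Module MT1.

Lemma tm_fuel_indep f g m : m < f -> m < g -> tm_fuel f m = tm_fuel g m.
Proof.
elim: f g m => [|f IH] [|g] m //= hf hg.
case: m hf hg => [|m] // hf hg; congr negb; apply: IH.
- have := trunc_logP (isT : 1 < 2) (isT : 0 < m.+1). 
  have : 0 < 2 ^ trunc_log 2 m.+1 by rewrite expn_gt0.
  lia.
- have := trunc_logP (isT : 1 < 2) (isT : 0 < m.+1).
  have : 0 < 2 ^ trunc_log 2 m.+1 by rewrite expn_gt0.
  lia.
Qed.

Lemma tm0 : tm 0 = false. Proof. by []. Qed.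

Lemma tm_unfold m : 0 < m -> tm m = ~~ tm (m - 2 ^ trunc_log 2 m).
Proof.
case: m => [|m] // _.
change (~~ tm_fuel m.+1 (m.+1 - 2 ^ trunc_log 2 m.+1) = ~~ tm (m.+1 - 2 ^ trunc_log 2 m.+1)).
congr negb; rewrite /tm; apply: tm_fuel_indep.
- have := trunc_logP (isT : 1 < 2) (isT : 0 < m.+1).
  have : 0 < 2 ^ trunc_log 2 m.+1 by rewrite expn_gt0.
  lia.
- lia.
Qed.

Lemma tm_top n j : j < 2 ^ n -> tm (2 ^ n + j) = ~~ tm j.
Proof.
move=> hj.
have hp : 0 < 2 ^ n by rewrite expn_gt0.
rewrite tm_unfold; last lia.
have -> : trunc_log 2 (2 ^ n + j) = n.
  apply: trunc_log_eq => //; rewrite expnS; lia.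
by rewrite addKn.
Qed.

Lemma tm_mul n Q j : j < 2 ^ n -> tm (2 ^ n * Q + j) = tm Q (+) tm j.
Proof.
move=> hj; elim/ltn_ind: Q => Q IH.
case: Q IH => [|Q] IH; first by rewrite muln0 add0n tm0.
set t := trunc_log 2 Q.+1.
have h1 : 2 ^ t <= Q.+1 by exact: trunc_logP.
have h2 : Q.+1 < 2 ^ t.+1 by exact: trunc_log_ltn.
have ht : 0 < 2 ^ t by rewrite expn_gt0.
have -> : Q.+1 = 2 ^ t + (Q.+1 - 2 ^ t) by lia.
rewrite tm_top; last by rewrite expnS in h2; lia.
have -> : 2 ^ n * (2 ^ t + (Q.+1 - 2 ^ t)) + j = 2 ^ (n + t) + (2 ^ n * (Q.+1 - 2 ^ t) + j).
  by rewrite expnD; lia.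
rewrite tm_top; last first.
  rewrite expnD expnS in h2 *.
  have : 2 ^ n * (Q.+1 - 2 ^ t) + j < 2 ^ n * (Q.+1 - 2 ^ t) + 2 ^ n by lia.
  move/leq_trans; apply. rewrite -mulnSr leq_mul2l; apply/orP; right; lia.
rewrite IH; last lia.
by rewrite addNb.
Qed.

Lemma tm_rev n j : j < 2 ^ n -> tm (2 ^ n - 1 - j) = tm (2 ^ n - 1) (+) tm j.
Proof.
elim: n j => [|n IH] j hj.
  by case: j hj.
have hp : 0 < 2 ^ n by rewrite expn_gt0.
have e : 2 ^ n.+1 - 1 = 2 ^ n + (2 ^ n - 1) by rewrite expnS; lia.
rewrite e tm_top; last lia.
case: (ltnP j (2 ^ n)) => hjn.
  have -> : 2 ^ n + (2 ^ n - 1) - j = 2 ^ n + (2 ^ n - 1 - j) by lia.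
  by rewrite tm_top ?IH ?addNb //; lia.
have -> : 2 ^ n + (2 ^ n - 1) - j = 2 ^ n - 1 - (j - 2 ^ n) by lia.
have -> : j = 2 ^ n + (j - 2 ^ n) by lia.
rewrite addKn tm_top; last by rewrite expnS in hj; lia.
rewrite IH; last by rewrite expnS in hj; lia.
by rewrite addNb addbN negbK.
Qed.

End MT1.
Import MT1.

Module MT2.
Local Open Scope ring_scope.

Lemma omega_blk n (q : int) j : (j < 2 ^ n)%N ->
  omega ((2 ^ n)%N%:Z * q + j%:Z) = omega ((2 ^ n)%N%:Z * q) (+) tm j.
Proof.
move=> hj; have hp : (0 < 2 ^ n)%N by rewrite expn_gt0.
case: q => [Q|Q].
  rewrite -!PoszM -PoszD /= tm_mul // -[(2 ^ n * Q)%N]addn0 tm_mul //.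
  by rewrite tm0 addbF.
have e1 : (2 ^ n)%N%:Z * Negz Q + j%:Z = Negz (2 ^ n * Q + (2 ^ n - 1 - j))%N.
  rewrite !NegzE; lia.
have e2 : (2 ^ n)%N%:Z * Negz Q = Negz (2 ^ n * Q + (2 ^ n - 1 - 0))%N.
  rewrite !NegzE; lia.
rewrite e1 e2 /= !tm_mul //; try lia.
by rewrite subn0 tm_rev // addbA.
Qed.

Lemma tm_pow n : tm (2 ^ n) = true.
Proof. by rewrite -[(2 ^ n)%N]addn0 tm_top ?expn_gt0. Qed.

Lemma omega_odd n (w : int) :
  omega ((2 ^ n)%N%:Z * (2 * w + 1)) = ~~ omega ((2 ^ n)%N%:Z * (2 * w)).
Proof.
have -> : (2 ^ n)%N%:Z * (2 * w + 1) = (2 ^ n.+1)%N%:Z * w + (2 ^ n)%N%:Z.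
  rewrite expnS PoszM; ring.
rewrite omega_blk ?ltn_exp2l // tm_pow addbT; congr (~~ omega _).
rewrite expnS PoszM; ring.
Qed.

Lemma int_par (p : int) : exists w, p = 2 * w \/ p = 2 * w + 1.
Proof.
exists (p %/ 2)%Z; have := divz_eq p 2.
have h0 := modz_ge0 p (isT : (2 : int) != 0).
have h1 := ltz_pmod p (isT : (0 : int) < 2).
lia.
Qed.

Lemma no_three n (v : int) :
  ~ (omega ((2 ^ n)%N%:Z * v) = omega ((2 ^ n)%N%:Z * (v + 1)) /\
     omega ((2 ^ n)%N%:Z * (v + 1)) = omega ((2 ^ n)%N%:Z * (v + 2))).
Proof.
have [w [->|->]] := int_par v => -[e1 e2].
  by move: e1; rewrite omega_odd; case: omega.
move: e2; have -> : 2 * w + 1 + 1 = 2 * (w + 1) by ring.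
have -> : 2 * w + 1 + 2 = 2 * (w + 1) + 1 by ring.
by rewrite omega_odd; case: omega.
Qed.

End MT2.
Import MT2.

Module MT3.
Local Open Scope ring_scope.

Lemma align n (P : int) b0 b1 :
 (forall j, (j < 2 ^ n)%N -> omega (P + j%:Z) = b0 (+) tm j) ->
 (forall j, (j < 2 ^ n)%N -> omega (P + (2 ^ n)%N%:Z + j%:Z) = b1 (+) tm j) ->
 exists q, P = (2 ^ n)%N%:Z * q.
Proof.
elim: n P b0 b1 => [|n IH] P b0 b1 h0 h1.
  by exists P; rewrite expn0 mul1r.
have hp : (0 < 2 ^ n)%N by rewrite expn_gt0.
have hlt : forall j, (j < 2 ^ n)%N -> (j < 2 ^ n.+1)%N.
  by move=> j hj; rewrite expnS; lia.
have hlt2 : forall j, (j < 2 ^ n)%N -> (2 ^ n + j < 2 ^ n.+1)%N.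
  by move=> j hj; rewrite expnS; lia.
have [p hP] : exists p, P = (2 ^ n)%N%:Z * p.
  apply: (IH P b0 (~~ b0)).
    by move=> j hj; apply: h0; apply: hlt.
  move=> j hj; rewrite addNb -addbN -(tm_top hj) -h0 ?hlt2 //.
  by congr omega; rewrite PoszD addrA.
set N := (2 ^ n)%N%:Z in hP *.
have eN : (2 ^ n.+1)%N%:Z = 2 * N by rewrite expnS PoszM.
have C0 : omega (N * p) = b0 by rewrite -hP -[P]addr0 h0 ?tm0 ?addbF ?expn_gt0.
have C1 : omega (N * (p + 1)) = ~~ b0.
  have := h0 _ (hlt2 _ hp) ; rewrite tm_top ?tm0 ?addbT // => <-.
  by congr omega; rewrite hP addn0; ring.
have C2 : omega (N * (p + 2)) = b1.
  have := h1 _ (expn_gt0 2 n.+1); rewrite tm0 addbF => <-.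
  by congr omega; rewrite hP eN; ring.
have C3 : omega (N * (p + 3)) = ~~ b1.
  have := h1 _ (hlt2 _ hp) ; rewrite tm_top ?tm0 ?addbT // => <-.
  by congr omega; rewrite hP eN addn0; ring.
have [w [ew|ew]] := int_par p.
  by exists w; rewrite hP ew eN; ring.
exfalso.
have D0 : omega (N * (2 * w)) = ~~ b0.
  by have := omega_odd n w; rewrite -ew C0 => ->; rewrite negbK.
have D1 : omega (N * (2 * (w + 1))) = ~~ b0.
  by rewrite -C1 ew; congr omega; ring.
have D2 : omega (N * (2 * (w + 1) + 1)) = b1.
  by rewrite -C2 ew; congr omega; ring.
have D3 : omega (N * (2 * (w + 2))) = ~~ b1.
  by rewrite -C3 ew; congr omega; ring.
have eb : b1 = b0 by move: D2; rewrite omega_odd D1 negbK.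
have := @no_three n.+1 w; rewrite eN; apply.
have r : forall u : int, 2 * N * u = N * (2 * u) by move=> u; ring.
rewrite !r D0 D1 -eb -D3; split => //; congr omega; ring.
Qed.

End MT3.
Import MT3.

Module MT4.

Lemma mkseq_add (T : Type) (f : nat -> T) a b :
  mkseq f (a + b) = mkseq f a ++ mkseq (fun i => f (a + i)) b.
Proof. by rewrite /mkseq iotaD map_cat add0n -[X in iota X b]addn0 iotaDl -map_comp. Qed.

Lemma eq_in_mkseq' (T : Type) (f g : nat -> T) n :
  (forall i, i < n -> f i = g i) -> mkseq f n = mkseq g n.
Proof. by move=> h; apply/eq_in_map => i; rewrite mem_iota add0n; apply: h. Qed.

Lemma block_mk n i : block n i = mkseq (fun j => i (+) tm j) (2 ^ n).
Proof.
elim: n i => [|n IH] i /=; first by rewrite /mkseq /= tm0 addbF.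
rewrite !IH expnS mul2n -addnn mkseq_add; congr (_ ++ _).
apply: eq_in_mkseq' => j hj; by rewrite tm_top // addNb addbN.
Qed.

Lemma size_block n i : size (block n i) = 2 ^ n.
Proof. by rewrite block_mk size_mkseq. Qed.

Lemma size_flat n ks : size (flatten [seq block n i | i <- ks]) = 2 ^ n * size ks.
Proof. elim: ks => [|i ks IH] /=; first by rewrite muln0. by rewrite size_cat IH size_block mulnS. Qed.

Lemma flat_inj n ks ks' : size ks = size ks' ->
  flatten [seq block n i | i <- ks] = flatten [seq block n i | i <- ks'] -> ks = ks'.
Proof.
elim: ks ks' => [|i ks IH] [|i' ks'] //= [hs] /eqP.
rewrite eqseq_cat ?size_block // => /andP[/eqP hb /eqP hf].
have -> : i = i'.
  have := congr1 (fun s => nth false s 0) hb => /=.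
  by rewrite !block_mk !nth_mkseq ?expn_gt0 // tm0 !addbF.
by rewrite (IH ks').
Qed.

Lemma decomp_align n alpha g0 ks g1 (m : int) :
  alpha = mkseq (fun i => omega (m + (i%:Z))%R) (size alpha) ->
  block_decomp n alpha g0 ks g1 ->
  exists q : int, (m + (size g0)%:Z = (2 ^ n)%N%:Z * q)%R.
Proof.
move=> hA [hd hk _ _ _].
have hn : forall i, i < size alpha -> nth false alpha i = omega (m + i%:Z)%R.
  by move=> i hi; rewrite {1}hA nth_mkseq.
case: ks hd hk => [|b0 [|b1 rest]] //= hd _.
have hsz : size alpha = size g0 + 2 ^ n + 2 ^ n + size (flatten [seq block n i | i <- rest]) + size g1.
  by rewrite hd !size_cat !size_block; lia.
apply: (@align n _ b0 b1) => j hj.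
  have -> : (m + (size g0)%:Z + j%:Z = m + (size g0 + j)%N%:Z)%R by rewrite PoszD GRing.addrA.
  rewrite -hn; last lia.
  rewrite hd -!catA nth_cat ltnNge leq_addr /= addKn.
  by rewrite nth_cat size_block hj block_mk nth_mkseq.
have -> : (m + (size g0)%:Z + (2 ^ n)%N%:Z + j%:Z = m + (size g0 + (2 ^ n + j))%N%:Z)%R
  by rewrite !PoszD !GRing.addrA.
rewrite -hn; last lia.
rewrite hd -!catA nth_cat ltnNge leq_addr /= addKn.
rewrite nth_cat size_block ltnNge leq_addr /= addKn.
by rewrite nth_cat size_block hj block_mk nth_mkseq.
Qed.

Lemma uniq_part n (alpha g0 ks g1 g0' ks' g1' : seq bool) (m : int) :
  alpha = mkseq (fun i => omega (m + (i%:Z))%R) (size alpha) ->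
  block_decomp n alpha g0 ks g1 -> block_decomp n alpha g0' ks' g1' ->
  [/\ g0 = g0', ks = ks' & g1 = g1'].
Proof.
move=> hA h h'.
have [q hq] := decomp_align hA h.
have [q' hq'] := decomp_align hA h'.
case: h h' => [hd _ _ _ /andP[s0 s1]] [hd' _ _ _ /andP[s0' s1']].
have hp : 0 < 2 ^ n by rewrite expn_gt0.
have er : size g0 = size g0'.
  move: hq hq' s0 s0' hp; set N := 2 ^ n; move=> hq hq' s0 s0' hp.
  have e : ((size g0)%:Z - (size g0')%:Z = N%:Z * (q - q'))%R.
    by rewrite GRing.mulrBr -hq -hq'; ring.
  clear hq hq'; move: e; generalize (q - q')%R => d e.
  have [d0|[d1|d2]] : d = 0%R \/ (1 <= d)%R \/ (d <= -1)%R by lia.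
  - by move: e; rewrite d0 GRing.mulr0; lia.
  - have : (N%:Z * 1 <= N%:Z * d)%R by rewrite ler_pM2l //; lia.
    lia.
  - have : (N%:Z * d <= N%:Z * -1)%R by rewrite ler_pM2l //; lia.
    lia.
have := hd; rewrite hd' => /eqP; rewrite eqseq_cat // => /andP[/eqP e0 /eqP e1].
have ek : size ks = size ks'.
  have := congr1 size e1; rewrite !size_cat !size_flat => e.
  move: e s1 s1' hp; set N := 2 ^ n => e s1 s1' hp.
  case: (ltngtP (size ks) (size ks')) => // h.
    have : N * (size ks).+1 <= N * size ks' by rewrite leq_mul2l h orbT.
    rewrite mulnS; move: (N * size ks) (N * size ks') e => a b e.
    set x := size g1 in e s1; set y := size g1' in e s1'; lia.
  have : N * (size ks').+1 <= N * size ks by rewrite leq_mul2l h orbT.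
  rewrite mulnS; move: (N * size ks) (N * size ks') e => a b e.
  set x := size g1 in e s1; set y := size g1' in e s1'; lia.
move/eqP: e1; rewrite eqseq_cat ?size_flat ?ek // => /andP[/eqP e2 /eqP e3].
split; first by rewrite e0.
  by apply: (@flat_inj n) => //; rewrite e2.
by rewrite e3.
Qed.

End MT4.
Import MT4.

Module MT5.

Definition roff (m : int) n : nat := `|((- m) %% (2 ^ n)%N%:Z)%Z|%N.

Lemma roff_spec m n : roff m n < 2 ^ n /\
  exists q : int, (m + (roff m n)%:Z = (2 ^ n)%N%:Z * q)%R.
Proof.
have hp : (0 < (2 ^ n)%N%:Z)%R by rewrite ltz_nat expn_gt0.
have hN : ((2 ^ n)%N%:Z != 0)%R by rewrite lt0r_neq0.
have h0 := modz_ge0 (- m) hN.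
have h1 := ltz_pmod (- m) hp.
have hd := divz_eq (- m) (2 ^ n)%N%:Z.
have e : ((roff m n)%:Z = ((- m) %% (2 ^ n)%N%:Z)%Z)%R by rewrite /roff; lia.
split.
  by rewrite -ltz_nat e.
exists (- ((- m) %/ (2 ^ n)%N%:Z)%Z)%R; rewrite e.
move: hd; set x := ((- m) %% _)%Z; set y := ((- m) %/ _)%Z => hd.
rewrite mulrN mulrC; lia.
Qed.

Lemma roff_next m n : roff m n.+1 <= roff m n + 2 ^ n.
Proof.
have [r1 [q1 e1]] := roff_spec m n.+1.
have [r0 [q0 e0]] := roff_spec m n.
rewrite expnS in r1 e1.
move: r1 e1 r0 e0; set M := 2 ^ n => r1 e1 r0 e0.
have hp : 0 < M by rewrite expn_gt0.
rewrite PoszM in e1.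
have e : ((roff m n.+1)%:Z - (roff m n)%:Z = M%:Z * (2 * q1 - q0))%R.
  by rewrite mulrBr; lia.
move: e; generalize (2 * q1 - q0)%R => d e.
have [d1|d2] : (d <= 1 \/ 2 <= d)%R by lia.
  have : (M%:Z * d <= M%:Z * 1)%R by rewrite ler_pM2l //; lia.
  lia.
have : (M%:Z * 2 <= M%:Z * d)%R by rewrite ler_pM2l //; lia.
lia.
Qed.

Lemma suffix_mk (f : nat -> bool) a b : b <= a ->
  suffix (mkseq (fun i => f (a - b + i)) b) (mkseq f a).
Proof.
move=> h; have -> : mkseq f a = mkseq f (a - b + b) by rewrite subnK.
by rewrite mkseq_add suffix_suffix.
Qed.

Lemma prefix_mk (f : nat -> bool) a b : b <= a ->
  prefix (mkseq f b) (mkseq f a).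
Proof.
move=> h; have -> : mkseq f a = mkseq f (b + (a - b)) by rewrite subnKC.
by rewrite mkseq_add prefix_prefix.
Qed.

Lemma mk_blocks n (P q : int) k : P = ((2 ^ n)%N%:Z * q)%R ->
  mkseq (fun i => omega (P + i%:Z)%R) (2 ^ n * k) =
  flatten [seq block n b | b <- mkseq (fun t => omega (P + (2 ^ n * t)%N%:Z)%R) k].
Proof.
move=> hP; elim: k => [|k IH]; first by rewrite muln0.
rewrite mulnS addnC mkseq_add IH mkseqS map_rcons flatten_rcons; congr (_ ++ _).
rewrite block_mk; apply: eq_in_mkseq' => i hi.
have e : (P + (2 ^ n * k + i)%N%:Z = (2 ^ n)%N%:Z * (q + k%:Z) + i%:Z)%R.
  by rewrite hP !PoszD PoszM; ring.
have e' : (P + (2 ^ n * k)%N%:Z = (2 ^ n)%N%:Z * (q + k%:Z))%R.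
  by rewrite hP PoszM; ring.
by rewrite e e' omega_blk.
Qed.

Lemma exist_part alpha (m : int) :
  alpha = mkseq (fun i => omega (m + (i%:Z))%R) (size alpha) -> 2 <= size alpha ->
  exists (n : nat) (g0 ks g1 : seq bool), block_decomp n alpha g0 ks g1.
Proof.
move=> hA hL.
set L := size alpha in hL.
pose Q := fun n => roff m n + 2 * 2 ^ n <= L.
have exP : exists n, Q n.
  exists 0; rewrite /Q; have [h _] := roff_spec m 0; rewrite expn0 in h *; lia.
have ubP : forall i, Q i -> i <= L.
  move=> i; rewrite /Q => h; have := ltn_expl i (isT : 1 < 2); lia.
case: (ex_maxnP exP ubP) => n Qn maxn.
have [hr [q hq]] := roff_spec m n.
have hp : 0 < 2 ^ n by rewrite expn_gt0.
move: Qn; rewrite /Q; set r := roff m n => Qn.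
set k := (L - r) %/ 2 ^ n.
have hk2 : 2 <= k by rewrite /k leq_divRL //; lia.
have hk4 : k <= 4.
  rewrite leqNgt; apply/negP => h5.
  have : 5 <= k by [].
  rewrite /k leq_divRL // => h.
  have : n.+1 <= n.
    apply: maxn; rewrite /Q; have := roff_next m n; rewrite expnS; lia.
  by rewrite ltnn.
have hdiv := divn_eq (L - r) (2 ^ n).
have hmod := ltn_pmod (L - r) hp.
rewrite -/k in hdiv.
set s := L - r - 2 ^ n * k.
have hs : s < 2 ^ n by rewrite /s; lia.
have eL : L = r + (2 ^ n * k + s) by rewrite /s; lia.
pose f := fun i : nat => omega (m + i%:Z)%R.
exists n, (mkseq f r), (mkseq (fun t => omega (m + r%:Z + (2 ^ n * t)%N%:Z)%R) k),
  (mkseq (fun i => f (r + 2 ^ n * k + i)) s).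
split.
- rewrite {1}hA -/L eL !mkseq_add; congr (_ ++ _).
  rewrite -(mk_blocks k hq); congr (_ ++ _).
    by apply: eq_in_mkseq' => i _; rewrite /f PoszD GRing.addrA.
  by apply: eq_in_mkseq' => i _; rewrite addnA.
- by rewrite size_mkseq hk2 hk4.
- exists (omega ((2 ^ n)%N%:Z * (q - 1))%R).
  have -> : mkseq f r = mkseq (fun i => omega ((2 ^ n)%N%:Z * (q - 1))%R (+) tm (2 ^ n - r + i)) r.
    apply: eq_in_mkseq' => i hi; rewrite -omega_blk; last lia.
    by rewrite /f; congr omega; lia.
  by rewrite block_mk; apply: suffix_mk; lia.
- exists (omega ((2 ^ n)%N%:Z * (q + k%:Z))%R).
  have -> : mkseq (fun i => f (r + 2 ^ n * k + i)) s =
            mkseq (fun i => omega ((2 ^ n)%N%:Z * (q + k%:Z))%R (+) tm i) s.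
    apply: eq_in_mkseq' => i hi; rewrite -omega_blk; last lia.
    by rewrite /f; congr omega; rewrite !PoszD PoszM; lia.
  by rewrite block_mk; apply: prefix_mk; lia.
- by rewrite !size_mkseq hr hs.
Qed.



End MT5.
Import MT5.

Unset Implicit Arguments.
Theorem proposition3p5 (alpha : seq bool) :
  occurs alpha -> 2 <= size alpha ->
  (exists (n : nat) (g0 ks g1 : seq bool), block_decomp n alpha g0 ks g1) /\
  (forall (n : nat) (g0 ks g1 g0' ks' g1' : seq bool),
      block_decomp n alpha g0 ks g1 -> block_decomp n alpha g0' ks' g1' ->
      [/\ g0 = g0', ks = ks' & g1 = g1']).
Proof.
move=> [_ [m hA]] hL; split; first exact: exist_part hA hL.
by move=> n g0 ks g1 g0' ks' g1'; apply: uniq_part hA.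
Qed.
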